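(* Let $A$ be a real $n\times n$ matrix all of whose eigenvalues $\lambda_1,\dots,\lambda_n$ are real and nonzero, and let $J$ be its Jordan normal form. For $\varepsilon\in\mathbb{C}$ and $a\in\mathbb{R}$ let $L_\varepsilon(a)=-\varepsilon a^2\,\mathrm{Id}+\mathrm{i}a\,\mathrm{Id}+\varepsilon J$ and $\Gamma_\varepsilon=\sup_{a\in\mathbb{R}}|L_\varepsilon(a)^{-1}|$. Let $\Omega(\sigma,\mu)=\{\varepsilon\in\mathbb{C}:\ \mathrm{Re}(\varepsilon)\ge\mu|\mathrm{Im}(\varepsilon)|,\ \sigma\le|\varepsilon|\le2\sigma\}$ with $\mu>\mu_0$, $\mu_0$ sufficiently large, and $\sigma>0$ sufficiently small. Then for every $\varepsilon\in\Omega(\sigma,\mu)$, $L_\varepsilon(a)$ is invertible for all $a\in\mathbb{R}$ and $$\Gamma_\varepsilon\le\sigma^{-1}C_{\lambda,\mu},$$ where $C_{\lambda,\mu}>0$ depends only on $\lambda_1,\dots,\lambda_n$ and $\mu$.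
   Context: $|\cdot|$ denotes a matrix norm on $n\times n$ complex matrices. *)

(* Defs.v *)
From HB Require Import structures.
From mathcomp Require Import all_boot all_order all_algebra.
From mathcomp Require Import complex.
From mathcomp Require Import reals.
Set Implicit Arguments. Unset Strict Implicit. Unset Printing Implicit Defensive.
Import Order.TTheory GRing.Theory Num.Theory.
Local Open Scope ring_scope.

Definition cabs (R : rcfType) (z : R[i]) : R := ComplexField.Normc.normc z.

(* The matrix norm |.| : the operator norm induced by the sup-norm on C^n,
   i.e. the maximal absolute row sum. *)
Definition mxnorm (R : rcfType) (n : nat) (M : 'M[R[i]]_n) : R :=
  \big[Num.max/0]_(i < n) \sum_(j < n) cabs (M i j).

(* This is exactly a block-diagonal matrix of Jordan blocks. *)
Definition jordan_matrix (R : nzRingType) (n : nat) (J : 'M[R]_n) : Prop :=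
  forall i j : 'I_n,
    (j != i -> (j : nat) != i.+1 -> J i j = 0) /\
    ((j : nat) = i.+1 -> (J i j = 0 \/ (J i j = 1 /\ J i i = J j j))).

(* J is a Jordan normal form of the real matrix A: a Jordan matrix
   similar to A (the eigenvalues being real, the similarity is real). *)
Definition jordan_form_of (R : comUnitRingType) (n : nat) (A J : 'M[R]_n) : Prop :=
  jordan_matrix J /\ exists P : 'M[R]_n, P \in unitmx /\ J = invmx P *m A *m P.

Definition Lmx (R : rcfType) (n : nat) (J : 'M[R]_n) (eps : R[i]) (a : R)
  : 'M[R[i]]_n :=
  (- eps * ((a ^+ 2)%:C)%C)%:M + (('i * a%:C)%C)%:M + eps *: map_mx (real_complex R) J.

Definition Omega (R : rcfType) (sigma mu : R) (eps : R[i]) : Prop :=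
  mu * `|complex.Im eps| <= complex.Re eps /\ sigma <= cabs eps <= 2 * sigma.

(* Main.v *)
Require Import Defs.
From HB Require Import structures.
From mathcomp Require Import all_boot all_order all_algebra.
From mathcomp Require Import complex.
From mathcomp Require Import reals.
From mathcomp Require Import ring lra zify.
Import Order.TTheory GRing.Theory Num.Theory.
Local Open Scope ring_scope.

Section Cabs.
Context {R : realType}.
Implicit Types x y z : R[i].

Lemma cabsE z : ((cabs z)%:C)%C = `|z|.
Proof. by case: z. Qed.

Lemma cabs_ge0 z : 0 <= cabs z.
Proof. by case: z => a b; rewrite /cabs /=; apply: sqrtr_ge0. Qed.

Lemma cabsD x y : cabs (x + y) <= cabs x + cabs y.
Proof. by rewrite -lecR rmorphD /= !cabsE ler_normD. Qed.

Lemma cabsM x y : cabs (x * y) = cabs x * cabs y.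
Proof. by apply: complexI; rewrite rmorphM /= !cabsE normrM. Qed.

Lemma cabsV x : cabs (x^-1) = (cabs x)^-1.
Proof. apply: complexI; rewrite fmorphV /= !cabsE; exact: normfV. Qed.

Lemma cabsN x : cabs (- x) = cabs x.
Proof. by apply: complexI; rewrite !cabsE normrN. Qed.

Lemma cabs0 : cabs (0 : R[i]) = 0.
Proof. by apply: complexI; rewrite !cabsE normr0. Qed.

Lemma cabs1 : cabs (1 : R[i]) = 1.
Proof. by apply: complexI; rewrite !cabsE normr1. Qed.

Lemma cabsR (r : R) : cabs (r%:C)%C = `|r|.
Proof. by rewrite /cabs /= expr0n /= addr0 sqrtr_sqr. Qed.

Lemma cabs_sum {I : finType} (F : I -> R[i]) :
  cabs (\sum_i F i) <= \sum_i cabs (F i).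
Proof.
rewrite -lecR rmorph_sum /= cabsE.
have -> : \sum_i ((cabs (F i))%:C)%C = \sum_i `|F i| by apply: eq_bigr => i _; rewrite cabsE.
exact: ler_norm_sum.
Qed.

Lemma cabs_sqr z : cabs z ^+ 2 = complex.Re z ^+ 2 + complex.Im z ^+ 2.
Proof. by case: z => a b; rewrite /cabs /= sqr_sqrtr // addr_ge0 ?sqr_ge0. Qed.

Lemma cabs_eq0 z : (cabs z == 0) = (z == 0).
Proof. by rewrite -(inj_eq (@complexI _)) /= cabsE normr_eq0. Qed.

Lemma sq_le (a b : R) : 0 <= b -> a ^+ 2 <= b ^+ 2 -> `|a| <= b.
Proof.
move=> b0 h.
have ha : `|a| ^+ 2 = a ^+ 2 by rewrite real_normK ?num_real.
have a0 := normr_ge0 a.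
rewrite -ha in h. nra.
Qed.

Lemma cabs_Re z : `|complex.Re z| <= cabs z.
Proof. apply: sq_le; first exact: cabs_ge0. by rewrite cabs_sqr lerDl sqr_ge0. Qed.

Lemma cabs_Im z : `|complex.Im z| <= cabs z.
Proof. apply: sq_le; first exact: cabs_ge0. by rewrite cabs_sqr lerDr sqr_ge0. Qed.

End Cabs.

Set Implicit Arguments. Unset Strict Implicit.

Section Mx.
Context {R : realType}.

Definition ebound m p (A : 'M[R[i]]_(m, p)) (b : R) := forall i j, cabs (A i j) <= b.
Arguments ebound {m p}.

Lemma ebound_mul m p q (A : 'M[R[i]]_(m, p)) (B : 'M[R[i]]_(p, q)) a b :
  ebound A a -> ebound B b -> ebound (A *m B) (p%:R * (a * b)).
Proof.
move=> hA hB i j; rewrite mxE.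
apply: le_trans (cabs_sum (fun l : 'I_p => A i l * B l j)) _.
have -> : p%:R * (a * b) = \sum_(l < p) (a * b).
  by rewrite sumr_const card_ord mulr_natl.
apply: ler_sum => l _; rewrite cabsM.
by apply: ler_pM; rewrite ?cabs_ge0.
Qed.

Lemma ebound_add m p (A B : 'M[R[i]]_(m, p)) a b :
  ebound A a -> ebound B b -> ebound (A + B) (a + b).
Proof. by move=> hA hB i j; rewrite mxE; apply: le_trans (cabsD _ _) _; apply: lerD. Qed.

Lemma ebound_sum m p N (F : nat -> 'M[R[i]]_(m, p)) (b : nat -> R) :
  (forall k, ebound (F k) (b k)) ->
  ebound (\sum_(k < N) F k) (\sum_(k < N) b k).
Proof.
move=> h; elim: N => [|N IH].
  by move=> i j; rewrite !big_ord0 mxE cabs0.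
by rewrite !big_ord_recr /=; apply: ebound_add.
Qed.

Lemma mxnorm_le n (A : 'M[R[i]]_n) b : 0 <= b -> ebound A b -> mxnorm A <= n%:R * b.
Proof.
move=> b0 hA; rewrite /mxnorm.
apply: (big_ind (fun v => v <= n%:R * b)).
- by apply: mulr_ge0.
- by move=> x y hx hy; rewrite ge_max hx hy.
move=> i _.
have -> : n%:R * b = \sum_(l < n) b by rewrite sumr_const card_ord mulr_natl.
by apply: ler_sum => l _.
Qed.

Definition pw n (M : 'M[R[i]]_n) k := iter k (fun X => X *m M) 1%:M.
Arguments pw {n}.

Lemma pw_shift n (M : 'M[R[i]]_n) :
  (forall i j : 'I_n, (j : nat) != i.+1 -> M i j = 0) ->
  forall k (i j : 'I_n), (j < i + k)%N -> pw M k i j = 0.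
Proof.
move=> hM; elim=> [|k IH] i j hij.
  rewrite /pw /= mxE; move: hij; rewrite addn0 => hij; case: eqP => [e|_] //; by rewrite e ltnn in hij.
rewrite /pw /= mxE; apply: big1 => l _.
have [hl|hl] := ltnP l (i + k).
  by rewrite -/(pw M k) IH // mul0r.
rewrite hM ?mulr0 //.
apply/negP => /eqP e; move: hij; rewrite e addnS ltnS; lia.
Qed.

Lemma pw_tele n (N : 'M[R[i]]_n) m :
  (\sum_(k < m) pw N k) *m (1%:M - N) = 1%:M - pw N m.
Proof.
rewrite mulmx_suml.
have -> : \sum_(k < m) pw N k *m (1%:M - N) = \sum_(k < m) (pw N k - pw N k.+1).
  by apply: eq_bigr => k _; rewrite mulmxBr mulmx1.
rewrite -(big_mkord xpredT (fun k => pw N k - pw N k.+1)) /=.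
rewrite -[LHS]opprK -sumrN.
rewrite (eq_bigr (fun k => pw N k.+1 - pw N k)); last by move=> k _; rewrite opprB.
by rewrite telescope_sumr // opprB.
Qed.

End Mx.
Arguments ebound {R m p}. Arguments pw {R n}.

Unset Implicit Arguments. Set Strict Implicit.

Section Key.
Variable R : realType.

Lemma pw_bound n (M : 'M[R[i]]_n) m : 0 <= m -> ebound M m ->
  forall k, ebound (pw M k) ((n%:R * m) ^+ k).
Proof.
move=> m0 hM; elim=> [|k IH].
  move=> i j; rewrite /pw /= mxE expr0.
  by case: (i == j); rewrite ?mulr1n ?mulr0n ?cabs1 ?cabs0.
have -> : (n%:R * m) ^+ k.+1 = n%:R * ((n%:R * m) ^+ k * m) by rewrite exprSr; ring.
exact: ebound_mul IH hM.
Qed.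

Lemma key n (L : 'M[R[i]]_n) (s c e : R) : 0 < s -> 0 < c -> 0 <= e ->
  (forall i j : 'I_n, j != i -> (j : nat) != i.+1 -> L i j = 0) ->
  (forall i, c * s <= cabs (L i i)) ->
  (forall i j, j != i -> cabs (L i j) <= e * s) ->
  L \in unitmx /\
  mxnorm (invmx L) <= n%:R * (n%:R * ((\sum_(k < n) (n%:R * (e / c)) ^+ k) * (c * s)^-1)).
Proof.
move=> s0 c0 e0 hz hd ho.
have dnz : forall i, L i i != 0.
  move=> i; rewrite -cabs_eq0; apply/negP => /eqP h.
  by have := hd i; rewrite h; nra.
pose Dinv : 'M[R[i]]_n := diag_mx (\row_i (L i i)^-1).
pose M : 'M[R[i]]_n := \matrix_(i, j) ((i != j)%:R * (L i j / L i i)).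
have hDL : Dinv *m L = 1%:M - (- M).
  rewrite opprK; apply/matrixP => i j; rewrite mul_diag_mx !mxE.
  case: eqP => [->|ne] /=; first by rewrite mulVf // mulr1n mul0r addr0.
  by rewrite mulr0n add0r mul1r mulrC.
pose S := \sum_(k < n) pw (- M) k.
have hX : (S *m Dinv) *m L = 1%:M.
  rewrite -mulmxA hDL pw_tele.
  rewrite (_ : pw (- M) n = 0) ?subr0 //.
  apply/matrixP => i j; rewrite mxE; apply: pw_shift; last by rewrite ltn_addl.
  move=> i' j' hj; rewrite !mxE.
  case: eqP => [<-|ne]; first by rewrite /= mulr0n mul0r oppr0.
  rewrite /= hz ?mul0r ?mulr0 ?oppr0 //; by apply/eqP => e'; apply: ne; rewrite e'.
have [_ Lu] := mulmx1_unit hX.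
split => //.
have -> : invmx L = S *m Dinv by rewrite -[LHS]mul1mx -hX mulmxK.
apply: mxnorm_le.
  apply: mulr_ge0; first by apply: ler0n.
  apply: mulr_ge0; last by rewrite invr_ge0; nra.
  by apply: sumr_ge0 => k _; apply: exprn_ge0; apply: mulr_ge0 => //; apply: divr_ge0 => //; lra.
apply: ebound_mul.
  apply: ebound_sum => k; apply: pw_bound.
    by apply: divr_ge0 => //; lra.
  move=> i j; rewrite !mxE cabsN.
  case: eqP => [->|ne] /=; first by rewrite mul0r cabs0; apply: divr_ge0 => //; lra.
  rewrite mul1r cabsM cabsV.
  have h1 : cabs (L i j) <= e * s by apply: ho; apply/eqP => e'; apply: ne; rewrite e'.
  have hp : 0 < cabs (L i i) by apply: lt_le_trans (hd i); apply: mulr_gt0.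
  rewrite ler_pdivrMr //; apply: le_trans h1 _.
  have -> : e * s = e / c * (c * s) by field; apply/eqP => c00; rewrite c00 ltxx in c0.
  apply: ler_wpM2l (hd i); apply: divr_ge0 => //; lra.
move=> i j; rewrite !mxE.
case: eqP => [->|ne].
  rewrite (_ : (L j j)^-1 *+ true = (L j j)^-1) // cabsV.
  have hp : 0 < c * s by apply: mulr_gt0.
  by rewrite lef_pV2 ?posrE ?hd //; apply: lt_le_trans (hd j).
rewrite (_ : (L i i)^-1 *+ false = 0) // cabs0 invr_ge0; nra.
Qed.
End Key.

Section Eig.
Variable R : realType.

Lemma diag_eig n (lambda : 'I_n -> R) (A J : 'M[R]_n) :
  char_poly A = \prod_(k < n) ('X - (lambda k)%:P) ->
  jordan_form_of A J -> forall i, exists k, J i i = lambda k.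
Proof.
move=> hA [hJ [P [Pu eJ]]] i.
have trig : is_trig_mx J^T.
  apply/forallP => i'; apply/forallP => j'; apply/implyP => hij; rewrite mxE.
  apply/eqP; apply: (proj1 (hJ j' i')).
    by apply/eqP => e; rewrite e ltnn in hij.
  by apply/eqP => e; rewrite e in hij; lia.
have cJ : char_poly J = \prod_(k < n) ('X - (J k k)%:P).
  rewrite (_ : \prod_(k < n) ('X - (J k k)%:P) = \prod_(k < n) ('X - (J^T k k)%:P)); last first.
    by apply: eq_bigr => k _; rewrite mxE.
  rewrite -(char_poly_trig trig) /char_poly -det_tr; congr (\det _).
  by apply/matrixP => i' j'; rewrite !mxE eq_sym.
have rJ : root (char_poly J) (J i i).
  rewrite /root cJ horner_prod (bigD1 i) //=.
  by rewrite !hornerE subrr mul0r.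
rewrite -eigenvalue_root_char in rJ.
case/eigenvalueP: rJ => v hv vn0.
pose w := v *m invmx P.
have hw : w *m A = J i i *: w.
  have e1 : J *m invmx P = invmx P *m A by rewrite eJ mulmxK.
  by rewrite /w -mulmxA -e1 mulmxA hv scalemxAl.
have wn0 : w != 0.
  apply/eqP => w0; move/eqP: vn0; apply.
  by rewrite -[v](mulmxKV Pu) -/w w0 mul0mx.
have : root (char_poly A) (J i i).
  by rewrite -eigenvalue_root_char; apply/eigenvalueP; exists w.
rewrite /root hA horner_prod prodf_seq_eq0 => /hasP [k _ /andP [_ hk]].
move: hk; rewrite !hornerE subr_eq0 => /eqP ->; by exists k.
Qed.

End Eig.

Section Real.
Variable R : realType.

Lemma sqr_abs (t : R) : `|t| ^+ 2 = t ^+ 2.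
Proof. by rewrite real_normK ?num_real. Qed.

Lemma diag_lb (x y lam a l Lam s : R) :
 0 < l -> l <= `|lam| -> `|lam| <= Lam -> `|y| <= x ->
 s ^+ 2 <= x ^+ 2 + y ^+ 2 -> x ^+ 2 + y ^+ 2 <= 4 * s ^+ 2 -> 0 < s -> s <= 1 ->
 s * (Lam + l) ^+ 2 <= l / 2 ->
 l / 4 * s <= `|x * (lam - a ^+ 2)| \/ l / 4 * s <= `|y * (lam - a ^+ 2) + a|.
Proof.
move=> l0 hl hL hyx hs1 hs2 s0 s1 hsm.
have y2 : y ^+ 2 <= x ^+ 2.
  rewrite -sqr_abs; have := normr_ge0 y; nra.
have x0 : 0 <= x by apply: le_trans hyx.
have xs : s / 2 <= x by nra.
have ya : `|y| <= 2 * s.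
  have := normr_ge0 y; rewrite -sqr_abs in y2 hs2; nra.
case: (lerP `|lam| (2 * `|lam - a ^+ 2|)) => hc.
  left; rewrite normrM (ger0_norm x0).
  have := normr_ge0 (lam - a ^+ 2); nra.
right.
have a2 : l / 2 < a ^+ 2.
  move: hc hl; case: (lerP 0 lam) => hlam.
    rewrite (ger0_norm hlam).
    case: (lerP 0 (lam - a ^+ 2)) => h; [rewrite (ger0_norm h)|rewrite (ltr0_norm h)]; nra.
  rewrite (ltr0_norm hlam).
  have := sqr_ge0 a.
  case: (lerP 0 (lam - a ^+ 2)) => h; [rewrite (ger0_norm h)|rewrite (ltr0_norm h)]; nra.
have aa : s * (Lam + l / 4) <= `|a|.
  case: (lerP (s * (Lam + l / 4)) `|a|) => // h; exfalso.
  have a0 := normr_ge0 a; rewrite -sqr_abs in a2.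
  have L0 : 0 <= Lam by apply: le_trans hL; exact: normr_ge0.
  have e1 : `|a| ^+ 2 <= (s * (Lam + l / 4)) ^+ 2 by nra.
  have e2 : (Lam + l / 4) ^+ 2 <= (Lam + l) ^+ 2 by nra.
  have e3 : (s * (Lam + l / 4)) ^+ 2 <= s * (Lam + l) ^+ 2.
    rewrite exprMn; have : s ^+ 2 <= s by nra.
    have := sqr_ge0 (Lam + l / 4); nra.
  lra.
have hb : `|y * (lam - a ^+ 2)| <= s * Lam.
  rewrite normrM.
  have h2 : 2 * `|lam - a ^+ 2| <= Lam by lra.
  have h3 := normr_ge0 y; have h4 := normr_ge0 (lam - a ^+ 2).
  have h5 : `|y| * `|lam - a ^+ 2| <= 2 * s * `|lam - a ^+ 2| by apply: ler_wpM2r.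
  have h6 : s * (2 * `|lam - a ^+ 2|) <= s * Lam by apply: ler_wpM2l; lra.
  nra.
have := lerB_normD a (y * (lam - a ^+ 2)).
rewrite [a + _]addrC => hh; rewrite mulrDr in aa; lra.
Qed.

End Real.

Lemma Lmx_entry (R : realType) n (J : 'M[R]_n) eps a i j :
  Lmx J eps a i j = ((- eps * ((a ^+ 2)%:C)%C + ('i * a%:C)%C) *+ (i == j)) + eps * ((J i j)%:C)%C.
Proof. by rewrite /Lmx !mxE mulrnDl. Qed.

Lemma diag_ReIm {R : realType} (x y lam a : R) :
  let d := (- (x +i* y)%C * ((a ^+ 2)%:C)%C + ('i * a%:C)%C) + (x +i* y)%C * (lam%:C)%C in
  complex.Re d = x * (lam - a ^+ 2) /\ complex.Im d = y * (lam - a ^+ 2) + a.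
Proof. by move=> d; rewrite /d /=; split; ring. Qed.

Theorem proposition5p1 (R : realType) (n : nat) (lambda : 'I_n -> R) :
  (forall k, lambda k != 0) ->
  exists mu0 : R, forall mu : R, mu0 < mu ->
  exists C : R, 0 < C /\ exists sigma0 : R, 0 < sigma0 /\
  forall (A J : 'M[R]_n),
    char_poly A = \prod_(k < n) ('X - (lambda k)%:P) ->
    jordan_form_of A J ->
  forall sigma : R, 0 < sigma -> sigma < sigma0 ->
  forall eps : R[i], Omega sigma mu eps ->
  forall a : R,
    Lmx J eps a \in unitmx /\ mxnorm (invmx (Lmx J eps a)) <= C / sigma.
Proof.
move=> hl.
pose Lam := \sum_k `|lambda k|.
pose Si := \sum_k `|lambda k|^-1.
pose l := (1 + Si)^-1.
have Si0 : 0 <= Si by apply: sumr_ge0 => k _; rewrite invr_ge0.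
have Lam_ge k : `|lambda k| <= Lam.
  rewrite /Lam (bigD1 k) //= lerDl; by apply: sumr_ge0.
have lk0 k : 0 < `|lambda k| by rewrite normr_gt0.
have l0 : 0 < l by rewrite invr_gt0; lra.
have l_le k : l <= `|lambda k|.
  rewrite /l -[`|lambda k|]invrK lef_pV2 ?posrE ?invr_gt0 //; last by lra.
  have : `|lambda k|^-1 <= Si by rewrite /Si (bigD1 k) //= lerDl; apply: sumr_ge0 => j _; rewrite invr_ge0.
  lra.
exists 1 => mu hmu.
pose c := l / 4.
have c0 : 0 < c by rewrite /c; lra.
pose K := n%:R * (n%:R * ((\sum_(k < n) (n%:R * (2 / c)) ^+ k) * c^-1)).
have K0 : 0 <= K.
  apply: mulr_ge0; first by apply: ler0n.
  apply: mulr_ge0; first by apply: ler0n.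
  apply: mulr_ge0; last by rewrite invr_ge0; lra.
  by apply: sumr_ge0 => k _; apply: exprn_ge0; apply: mulr_ge0; [apply: ler0n| apply: divr_ge0; lra].
exists (K + 1); split; first by lra.
have Lam0 : 0 <= Lam by apply: sumr_ge0.
have q0 : 0 < 2 * (Lam + l) ^+ 2 by apply: mulr_gt0 => //; apply: exprn_gt0; lra.
exists (Num.min 1 (l / (2 * (Lam + l) ^+ 2))); split.
  by rewrite lt_min ltr01 /= divr_gt0.
move=> A J hA hJ s s0 ss0 eps [hO1 /andP [hO2 hO3]] a.
have [hs1 hs2] : s < 1 /\ s < l / (2 * (Lam + l) ^+ 2) by move: ss0; rewrite lt_min => /andP.
have hJm := proj1 hJ.

have hk := @key R n (Lmx J eps a) s c 2 s0 c0 (ler0n _ 2).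
have neqF (i j : 'I_n) : j != i -> (i == j) = false by move=> h; apply/negbTE; rewrite eq_sym.
case: hk.
- move=> i j hji hji1; rewrite Lmx_entry neqF // mulr0n add0r.
  by rewrite (proj1 (hJm i j) hji hji1) rmorph0 mulr0.
- move=> i; case: (@diag_eig R n lambda A J hA hJ i) => k hk.
  rewrite Lmx_entry eqxx mulr1n hk.
  move: hO1 hO2 hO3; case: eps => x y hO1 hO2 hO3.
  have {}hO1 : mu * `|y| <= x := hO1.
  have [hRe hIm] := diag_ReIm x y (lambda k) a.
  have csq : cabs (x +i* y)%C ^+ 2 = x ^+ 2 + y ^+ 2 := cabs_sqr _.
  have cge := cabs_ge0 (x +i* y)%C.
  have hyx : `|y| <= x.
    have := normr_ge0 y; nra.
  have h1 : s ^+ 2 <= x ^+ 2 + y ^+ 2 by rewrite -csq; nra.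
  have h2 : x ^+ 2 + y ^+ 2 <= 4 * s ^+ 2 by rewrite -csq; nra.
  have hsm : s * (Lam + l) ^+ 2 <= l / 2.
    move: hs2; rewrite ltr_pdivlMr // => hs2; nra.
  case: (@diag_lb R x y (lambda k) a l Lam s l0 (l_le k) (Lam_ge k) hyx h1 h2 s0 (ltW hs1) hsm) => h.
    by apply: le_trans (cabs_Re _); rewrite hRe.
  by apply: le_trans (cabs_Im _); rewrite hIm.
- move=> i j hji; rewrite Lmx_entry neqF // mulr0n add0r cabsM cabsR.
  have hJ1 : `|J i j| <= 1.
    case: (eqVneq (j : nat) i.+1) => e.
      case: (proj2 (hJm i j) e) => [->|[-> _]]; by rewrite ?normr0 ?normr1.
    by rewrite (proj1 (hJm i j) hji e) normr0.
  have := normr_ge0 (J i j); have := cabs_ge0 eps; nra.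
move=> Lu hn; split => //.
apply: le_trans hn _.
have -> : n%:R * (n%:R * ((\sum_(k < n) (n%:R * (2 / c)) ^+ k) * (c * s)^-1)) = K / s.
  by rewrite /K [(c * s)^-1]invfM !mulrA.
by rewrite ler_pM2r ?invr_gt0 //; lra.
Qed.
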